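(* Let $2\le k\le n$. Let $g_1:\mathbb{Z}^{n+1}\to[0,\infty)$ and, for $i=2,\dots,k$, $g_i:\mathbb{Z}^{n}\to[0,\infty)$ with $g_i\in\ell^2(\mathbb{Z}^n)$. For $z=(z_1,\dots,z_{n+1})\in\mathbb{Z}^{n+1}$ write $\hat z^{i}=(z_1,\dots,z_{i-1},z_{i+1},\dots,z_{n+1})\in\mathbb{Z}^n$. Then $$\Big\|g_1(z)\prod_{i=2}^kg_i(\hat z^{i})\Big\|_{\ell^{\frac{2}{k-1}}_z(\mathbb{Z}^{n+1})}\le\|g_1\|_{\ell^\infty_{z_1,z_{k+1},\dots,z_{n+1}}\ell^2_{z_2,\dots,z_k}}\prod_{i=2}^k\|g_i\|_{\ell^2(\mathbb{Z}^n)},$$ where $\|g_1\|_{\ell^\infty_{z_1,z_{k+1},\dots,z_{n+1}}\ell^2_{z_2,\dots,z_k}}=\sup_{z_1,z_{k+1},\dots,z_{n+1}}\big(\sum_{z_2,\dots,z_k}|g_1(z)|^2\big)^{1/2}$.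
   Context: This is a discrete Loomis–Whitney type inequality. In the paper it is phrased on an oblique lattice $\mathcal{L}=\{\sum_{j=1}^{n+1}z_jN_j:z\in\mathbb{Z}^{n+1}\}$ generated by linearly independent unit vectors $N_1,\dots,N_{n+1}$, with $g_i$ defined on the projected lattices $\pi_{N_i}(\mathcal{L})$ (projection along $N_i$ onto a hyperplane); in the coordinates $z$ this is exactly the statement above, since $g_i\circ\pi_{N_i}$ is a function of $\hat z^i$. *)

(* Defs.v *)
(* classical reals. Points of Z^m are lists of integers of length m;
   coordinate z_j (1-based, as in the paper) is the (j-1)-th list entry. *)
From Stdlib Require Import Reals ZArith List.
Import ListNotations.
Open Scope R_scope.

Definition sumR (f : list Z -> R) (S : list (list Z)) : R :=
  fold_right (fun z acc => f z + acc) 0 S.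

Definition prodR (a b : nat) (f : nat -> R) : R :=
  fold_right (fun i acc => f i * acc) 1 (seq a (S b - a)).

(* x^p for x >= 0 and p > 0, with 0^p = 0 *)
Definition rpow (x p : R) : R := if Rle_dec x 0 then 0 else Rpower x p.

(* hat z^i (1-based i): delete the i-th coordinate *)
Definition hat (i : nat) (z : list Z) : list Z :=
  firstn (pred i) z ++ skipn i z.

(* A is an upper bound of the l^2(Z^m) norm of h:
   every finite partial sum of h^2 is <= A^2 (so ||h||_2 = inf of such A >= 0). *)
Definition l2_bound (m : nat) (h : list Z -> R) (A : R) : Prop :=
  forall T : list (list Z), NoDup T -> Forall (fun w => length w = m) T ->
    sumR (fun w => h w ^ 2) T <= A ^ 2.

(* M is an upper bound of the mixed norm
   sup_{z_1, z_{k+1},...,z_{n+1}} (sum_{z_2,...,z_k} |g1 z|^2)^{1/2}. *)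
Definition mixed_bound (n k : nat) (g1 : list Z -> R) (M : R) : Prop :=
  forall (a : Z) (b : list Z) (T : list (list Z)),
    length b = (S n - k)%nat -> NoDup T -> Forall (fun w => length w = pred k) T ->
    sumR (fun w => Rabs (g1 (a :: w ++ b)) ^ 2) T <= M ^ 2.

(* Main.v *)
Require Import Defs.
From Stdlib Require Import Reals ZArith List Lia Lra ClassicalEpsilon.
Import ListNotations.
Open Scope R_scope.

Section Gen.
Context {A : Type}.
Definition ls (f : A -> R) (l : list A) : R := fold_right (fun x acc => f x + acc) 0 l.
Definition lp (f : A -> R) (l : list A) : R := fold_right (fun x acc => f x * acc) 1 l.

Lemma ls_app f l1 l2 : ls f (l1 ++ l2) = ls f l1 + ls f l2.
Proof. induction l1; simpl; [lra|rewrite IHl1; lra]. Qed.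
Lemma ls_ext_in f g l : (forall x, In x l -> f x = g x) -> ls f l = ls g l.
Proof. induction l; simpl; intros H; auto. rewrite H, IHl; auto. Qed.
Lemma ls_le f g l : (forall x, In x l -> f x <= g x) -> ls f l <= ls g l.
Proof. induction l; simpl; intros H; [lra|]. specialize (IHl (fun x h => H x (or_intror h))). specialize (H a (or_introl eq_refl)). lra. Qed.
Lemma ls_nonneg f l : (forall x, In x l -> 0 <= f x) -> 0 <= ls f l.
Proof. induction l; simpl; intros H; [lra|]. specialize (IHl (fun x h => H x (or_intror h))). specialize (H a (or_introl eq_refl)). lra. Qed.
Lemma ls_scal c f l : ls (fun x => c * f x) l = c * ls f l.
Proof. induction l; simpl; [lra|rewrite IHl; lra]. Qed.
Lemma ls_plus f g l : ls (fun x => f x + g x) l = ls f l + ls g l.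
Proof. induction l; simpl; [lra|rewrite IHl; lra]. Qed.
Lemma ls_const c l : ls (fun _ => c) l = INR (length l) * c.
Proof. induction l; simpl length; [simpl; lra|]. rewrite S_INR. simpl. rewrite IHl. lra. Qed.
Lemma ls_in f l x : (forall y, In y l -> 0 <= f y) -> In x l -> f x <= ls f l.
Proof. induction l; simpl; intros H Hx; [contradiction|destruct Hx as [<-|Hx]].
 - assert (0 <= ls f l) by (apply ls_nonneg; auto). lra.
 - assert (f x <= ls f l) by auto. specialize (H a (or_introl eq_refl)). lra. Qed.
Lemma ls_zero f l : (forall y, In y l -> 0 <= f y) -> ls f l <= 0 -> forall x, In x l -> f x = 0.
Proof. intros H H0 x Hx. pose proof (ls_in f l x H Hx). specialize (H x Hx). lra. Qed.

Lemma lp_ext_in f g l : (forall x, In x l -> f x = g x) -> lp f l = lp g l.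
Proof. induction l; simpl; intros H; auto. rewrite H, IHl; auto. Qed.
Lemma lp_nonneg f l : (forall x, In x l -> 0 <= f x) -> 0 <= lp f l.
Proof. induction l; simpl; intros H; [lra|]. apply Rmult_le_pos; auto. Qed.
Lemma lp_le f g l : (forall x, In x l -> 0 <= f x <= g x) -> lp f l <= lp g l.
Proof. induction l; simpl; intros H; [lra|].
 assert (0 <= lp f l) by (apply lp_nonneg; intros; apply H; auto).
 destruct (H a (or_introl eq_refl)). apply Rmult_le_compat; auto. Qed.
Lemma lp_zero f l x : In x l -> f x = 0 -> lp f l = 0.
Proof. induction l; simpl; intros Hx Hf; [contradiction|destruct Hx as [<-|Hx]; [rewrite Hf; lra|rewrite IHl; auto; lra]]. Qed.
Lemma lp_mult f g l : lp (fun x => f x * g x) l = lp f l * lp g l.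
Proof. induction l; simpl; [lra|rewrite IHl; lra]. Qed.
Lemma lp_exp f l : lp (fun x => exp (f x)) l = exp (ls f l).
Proof. induction l; simpl. rewrite exp_0; auto. rewrite IHl, exp_plus; auto. Qed.
Lemma lp_filter (P : A -> bool) f l : lp f l = lp f (filter P l) * lp f (filter (fun x => negb (P x)) l).
Proof. induction l; simpl; [lra|]. destruct (P a); simpl; rewrite IHl; lra. Qed.
End Gen.

Lemma ls_map {A B} (h : A -> B) f l : ls f (map h l) = ls (fun x => f (h x)) l.
Proof. induction l; simpl; auto. rewrite IHl; auto. Qed.
Lemma ls_flat_map {A B} (h : A -> list B) f l : ls f (flat_map h l) = ls (fun x => ls f (h x)) l.
Proof. induction l; simpl; auto. rewrite ls_app, IHl; auto. Qed.
Lemma ls_swap {A B} (h : A -> B -> R) l1 l2 :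
  ls (fun x => ls (fun y => h x y) l2) l1 = ls (fun y => ls (fun x => h x y) l1) l2.
Proof. induction l1; simpl. induction l2; simpl; auto; lra.
 rewrite IHl1, <- ls_plus. auto. Qed.

Lemma rpow_nonneg x p : 0 <= rpow x p.
Proof. unfold rpow; destruct (Rle_dec x 0); [lra|]. unfold Rpower; left; apply exp_pos. Qed.
Lemma rpow_pos x p : 0 < x -> rpow x p = exp (p * ln x).
Proof. unfold rpow; destruct (Rle_dec x 0); [lra|auto]. Qed.
Lemma rpow_0 p : rpow 0 p = 0.
Proof. unfold rpow; destruct (Rle_dec 0 0); lra. Qed.
Lemma rpow_mult x y p : 0 <= x -> 0 <= y -> rpow (x*y) p = rpow x p * rpow y p.
Proof. intros Hx Hy. destruct (Req_dec x 0) as [->|Hx']. rewrite Rmult_0_l, !rpow_0; lra.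
 destruct (Req_dec y 0) as [->|Hy']. rewrite Rmult_0_r, !rpow_0; lra.
 rewrite !rpow_pos; try nra. rewrite ln_mult, <- exp_plus by lra. f_equal; ring. Qed.
Lemma rpow_sq x p : 0 <= x -> rpow (x^2) p = rpow x (2*p).
Proof. intros Hx. destruct (Req_dec x 0) as [->|Hx']. rewrite pow_i, !rpow_0; auto; lia.
 rewrite !rpow_pos; try nra. simpl. rewrite Rmult_1_r, ln_mult by lra. f_equal; ring. Qed.
Lemma exp_le x y : x <= y -> exp x <= exp y.
Proof. intros [H|H]; [left; apply exp_increasing; auto|subst; lra]. Qed.
Lemma ln_le' x y : 0 < x -> x <= y -> ln x <= ln y.
Proof. intros H [H1|H1]; [left; apply ln_increasing; auto|subst; lra]. Qed.
Lemma rpow_le x y p : 0 < p -> 0 <= x <= y -> rpow x p <= rpow y p.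
Proof. intros Hp [Hx Hxy]. destruct (Req_dec x 0) as [->|Hx']. rewrite rpow_0; apply rpow_nonneg.
 rewrite !rpow_pos by lra. apply exp_le. apply Rmult_le_compat_l; [lra|]. apply ln_le'; lra. Qed.
Lemma rpow_rpow y p q : 0 <= y -> rpow (rpow y p) q = rpow y (p*q).
Proof. intros Hy. destruct (Req_dec y 0) as [->|Hy']. rewrite !rpow_0; auto.
 rewrite (rpow_pos y p) by lra. rewrite (rpow_pos y) by lra. rewrite rpow_pos by apply exp_pos. rewrite ln_exp. f_equal; ring. Qed.
Lemma rpow_1 y : 0 <= y -> rpow y 1 = y.
Proof. intros Hy. destruct (Req_dec y 0) as [->|Hy']. rewrite !rpow_0; auto.
 rewrite rpow_pos by lra. rewrite Rmult_1_l, exp_ln; lra. Qed.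
Lemma rpow_lp {A} (f : A -> R) l p : (forall x, In x l -> 0 <= f x) ->
  lp (fun j => rpow (f j) p) l = rpow (lp f l) p.
Proof. induction l; simpl; intros H.
 - rewrite rpow_pos by lra. rewrite ln_1, Rmult_0_r, exp_0; auto.
 - rewrite IHl by auto. rewrite rpow_mult; auto. apply lp_nonneg; auto. Qed.

Lemma jensen_exp (w x : nat -> R) (Js : list nat) :
  (forall j, In j Js -> 0 <= w j) -> ls w Js = 1 ->
  exp (ls (fun j => w j * x j) Js) <= ls (fun j => w j * exp (x j)) Js.
Proof. intros Hw H1. set (mu := ls (fun j => w j * x j) Js).
 apply Rle_trans with (ls (fun j => exp mu * w j + exp mu * (w j * x j) + (- exp mu * mu) * w j) Js).
 - rewrite !ls_plus, !ls_scal, H1. fold mu. right; ring.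
 - apply ls_le. intros j Hj. replace (exp (x j)) with (exp mu * exp (x j - mu)).
   2:{ rewrite <- exp_plus. f_equal; ring. }
   pose proof (exp_ineq1_le (x j - mu)). pose proof (exp_pos mu). specialize (Hw j Hj).
   assert (0 <= w j * (exp mu * (exp (x j - mu) - (1 + (x j - mu))))).
   { apply Rmult_le_pos; auto. apply Rmult_le_pos; lra. } nra. Qed.

Lemma holder {B} (T : list B) (Js : list nat) (a : nat -> B -> R) (th : nat -> R) :
  (forall j t, 0 <= a j t) -> (forall j, In j Js -> 0 < th j) -> 1 <= ls th Js ->
  ls (fun t => lp (fun j => rpow (a j t) (th j)) Js) T
  <= lp (fun j => rpow (ls (a j) T) (th j)) Js.
Proof.
 intros Ha Hth Hs.
 assert (HP : 0 <= lp (fun j => rpow (ls (a j) T) (th j)) Js) by (apply lp_nonneg; intros; apply rpow_nonneg).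
 destruct (classic (exists j, In j Js /\ ls (a j) T <= 0)) as [[j [Hj H0]] | Hall].
 - rewrite (ls_ext_in _ (fun _ => 0)). rewrite ls_const; lra.
   intros t Ht. apply (lp_zero _ _ j Hj). rewrite (ls_zero (a j) T) by auto. apply rpow_0.
 - assert (HS : forall j, In j Js -> 0 < ls (a j) T).
   { intros j Hj. apply Rnot_le_lt. intros H. apply Hall; eauto. }
   set (s := ls th Js). set (P := lp (fun j => rpow (ls (a j) T) (th j)) Js).
   set (S j := ls (a j) T).
   assert (Hclaim : forall t, In t T -> lp (fun j => rpow (a j t) (th j)) Js
        <= P * ls (fun j => th j / s * (a j t / S j)) Js).
   { intros t Ht.
     assert (HR : 0 <= P * ls (fun j => th j / s * (a j t / S j)) Js).
     { apply Rmult_le_pos; [apply HP|]. apply ls_nonneg. intros j Hj.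
       specialize (Hth j Hj). specialize (HS j Hj). specialize (Ha j t). unfold S.
       assert (Hs' : 0 < s) by (unfold s; lra).
       unfold Rdiv. pose proof (Rinv_0_lt_compat _ Hs'). pose proof (Rinv_0_lt_compat _ HS). apply Rmult_le_pos; apply Rmult_le_pos; lra. }
     destruct (classic (exists j, In j Js /\ a j t <= 0)) as [[j [Hj H0]] | Hall2].
     - rewrite (lp_zero _ _ j Hj); auto. replace (a j t) with 0 by (specialize (Ha j t); lra). apply rpow_0.
     - assert (Hat : forall j, In j Js -> 0 < a j t).
       { intros j Hj. apply Rnot_le_lt. intros H. apply Hall2; eauto. }
       set (x j := ln (a j t) - ln (S j)).
       assert (Hx : forall j, In j Js -> x j <= 0).
       { intros j Hj. unfold x. assert (ln (a j t) <= ln (S j)); [|lra].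
         apply ln_le'; auto. apply ls_in; auto. }
       rewrite (lp_ext_in _ (fun j => exp (th j * ln (S j) + th j * x j))).
       2:{ intros j Hj. rewrite rpow_pos by auto. f_equal. unfold x; ring. }
       rewrite lp_exp, ls_plus, exp_plus.
       assert (HPe : P = exp (ls (fun j => th j * ln (S j)) Js)).
       { unfold P. rewrite <- lp_exp. apply lp_ext_in. intros j Hj. apply rpow_pos. apply HS; auto. }
       rewrite HPe. apply Rmult_le_compat_l; [left; apply exp_pos|].
       assert (Hs0 : 0 < s) by (unfold s; lra).
       apply Rle_trans with (exp (ls (fun j => th j / s * x j) Js)).
       + apply exp_le. apply ls_le. intros j Hj. specialize (Hx j Hj). specialize (Hth j Hj).
         assert (0 < / s <= 1). { split. apply Rinv_0_lt_compat; lra.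
           apply Rmult_le_reg_l with s; [lra|]. rewrite Rinv_r; unfold s in *; lra. }
         assert (0 <= th j * (- x j) * (1 - / s)). { apply Rmult_le_pos; [apply Rmult_le_pos|]. all: lra. }
         unfold Rdiv. nra.
       + rewrite (ls_ext_in (fun j => th j / s * (a j t / S j)) (fun j => th j / s * exp (x j))).
         2:{ intros j Hj. f_equal. unfold x. unfold Rminus. rewrite exp_plus, exp_Ropp, !exp_ln; auto.
             apply HS; auto. }
         apply jensen_exp. intros j Hj. specialize (Hth j Hj). unfold Rdiv. apply Rmult_le_pos; [lra|].
         left; apply Rinv_0_lt_compat; lra.
         unfold Rdiv. rewrite (ls_ext_in _ (fun j => / s * th j)) by (intros; ring).
         rewrite ls_scal. fold s. field. lra. }
   apply Rle_trans with (ls (fun t => P * ls (fun j => th j / s * (a j t / S j)) Js) T).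
   + apply ls_le; auto.
   + rewrite ls_scal. rewrite ls_swap.
     rewrite (ls_ext_in _ (fun j => th j / s)).
     * unfold Rdiv. rewrite (ls_ext_in _ (fun j => / s * th j)) by (intros; ring).
       rewrite ls_scal. fold s. assert (0 < s) by (unfold s; lra).
       rewrite Rinv_l by lra. lra.
     * intros j Hj. specialize (HS j Hj).
       rewrite (ls_ext_in _ (fun t => (th j / s / S j) * a j t)) by (intros; unfold Rdiv; ring).
       rewrite ls_scal. fold (S j). field. unfold S, s in *; split; lra.
Qed.

Fixpoint boxlist (Vs : list (list Z)) : list (list Z) :=
  match Vs with [] => [[]] | V :: Vs' => flat_map (fun t => map (cons t) (boxlist Vs')) V end.
Definition boxsum Vs (f : list Z -> R) := ls f (boxlist Vs).
Lemma boxsum_cons V Vs f : boxsum (V::Vs) f = ls (fun t => boxsum Vs (fun w => f (t::w))) V.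
Proof. unfold boxsum; simpl. rewrite ls_flat_map. apply ls_ext_in; intros; apply ls_map. Qed.

Definition lmax {A} (h : A -> R) l := fold_right (fun t acc => Rmax (h t) acc) 0 l.
Lemma lmax_ge {A} (h : A -> R) l t : In t l -> h t <= lmax h l.
Proof. induction l; simpl; intros H; [contradiction|]. destruct H as [<-|H]. apply Rmax_l.
 eapply Rle_trans; [apply IHl; auto|apply Rmax_r]. Qed.
Lemma lmax_nonneg {A} (h : A -> R) l : 0 <= lmax h l.
Proof. induction l; simpl; [lra|]. eapply Rle_trans; [apply IHl|apply Rmax_r]. Qed.
Lemma lmax_attain {A} (h : A -> R) l : lmax h l <= 0 \/ exists t, In t l /\ lmax h l <= h t.
Proof. induction l; simpl; [left; lra|]. destruct IHl as [H|[t [Ht H]]].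
 - apply Rmax_case_strong; intros; [right; exists a; split; auto; lra|left; auto].
 - apply Rmax_case_strong; intros; right; [exists a|exists t]; split; auto; lra. Qed.

Fixpoint norm (Vs : list (list Z)) (kd : nat -> bool) (f : list Z -> R) : R :=
  match Vs with
  | [] => f []
  | V :: Vs' => if kd 0%nat then ls (fun t => norm Vs' (fun c => kd (S c)) (fun w => f (t::w))) V
                else lmax (fun t => norm Vs' (fun c => kd (S c)) (fun w => f (t::w))) V
  end.

Lemma norm_nonneg Vs kd f : (forall w, 0 <= f w) -> 0 <= norm Vs kd f.
Proof. revert kd f; induction Vs; simpl; intros kd f H; auto.
 destruct (kd 0%nat). apply ls_nonneg; intros; apply IHVs; auto. apply lmax_nonneg. Qed.

Lemma finner Vs (Js : list nat) (F : nat -> list Z -> R) (kind : nat -> nat -> bool) (th : nat -> R) :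
  (forall j w, 0 <= F j w) -> (forall j, In j Js -> 0 < th j) ->
  (forall c, (c < length Vs)%nat -> 1 <= ls th (filter (fun j => kind j c) Js)) ->
  boxsum Vs (fun w => lp (fun j => rpow (F j w) (th j)) Js)
  <= lp (fun j => rpow (norm Vs (kind j) (F j)) (th j)) Js.
Proof.
  revert F kind. induction Vs as [|V Vs IH]; intros F kind HF Hth Hc.
  - unfold boxsum; simpl. lra.
  - rewrite boxsum_cons.
    set (a j t := norm Vs (fun c => kind j (S c)) (fun w => F j (t::w))).
    set (P j := kind j 0%nat).
    apply Rle_trans with (ls (fun t => lp (fun j => rpow (a j t) (th j)) Js) V).
    { apply ls_le. intros t Ht. apply (IH (fun j w => F j (t::w)) (fun j c => kind j (S c))); auto.
      intros c Hc'. apply Hc. simpl; lia. }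
    set (C := lp (fun j => rpow (lmax (a j) V) (th j)) (filter (fun j => negb (P j)) Js)).
    apply Rle_trans with (ls (fun t => C * lp (fun j => rpow (a j t) (th j)) (filter P Js)) V).
    { apply ls_le. intros t Ht. rewrite (lp_filter P). rewrite Rmult_comm. apply Rmult_le_compat_r.
      apply lp_nonneg; intros; apply rpow_nonneg.
      apply lp_le. intros j Hj. split. apply rpow_nonneg. apply rpow_le.
      apply Hth. apply filter_In in Hj; tauto. split. apply norm_nonneg; auto. apply lmax_ge; auto. }
    rewrite ls_scal.
    assert (HH : ls (fun t => lp (fun j => rpow (a j t) (th j)) (filter P Js)) V
               <= lp (fun j => rpow (ls (a j) V) (th j)) (filter P Js)).
    { apply holder. intros; apply norm_nonneg; auto. intros j Hj; apply Hth. apply filter_In in Hj; tauto.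
      apply Hc. simpl; lia. }
    rewrite (lp_filter P (fun j => rpow (norm (V :: Vs) (kind j) (F j)) (th j))).
    replace (lp (fun j => rpow (norm (V :: Vs) (kind j) (F j)) (th j)) (filter P Js))
      with (lp (fun j => rpow (ls (a j) V) (th j)) (filter P Js)).
    replace (lp (fun j => rpow (norm (V :: Vs) (kind j) (F j)) (th j)) (filter (fun j => negb (P j)) Js))
      with C.
    rewrite (Rmult_comm _ C). apply Rmult_le_compat_l; auto.
    unfold C; apply lp_nonneg; intros; apply rpow_nonneg.
    + unfold C. apply lp_ext_in. intros j Hj. apply filter_In in Hj. simpl.
      destruct Hj as [_ Hj]. unfold P in Hj. destruct (kind j 0%nat); simpl in Hj; [discriminate|auto].
    + apply lp_ext_in. intros j Hj. apply filter_In in Hj. simpl.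
      destruct Hj as [_ Hj]. unfold P in Hj. rewrite Hj. auto.
Qed.

Fixpoint enum (Vs : list (list Z)) (kd : nat -> bool) (sel : list Z -> Z) : list (list Z) :=
  match Vs with
  | [] => [[]]
  | V :: Vs' => if kd 0%nat then
      flat_map (fun t => map (cons t) (enum Vs' (fun c => kd (S c)) (fun p => sel (t::p)))) V
    else map (cons (sel [])) (enum Vs' (fun c => kd (S c)) (fun p => sel (sel [] :: p)))
  end.

Lemma norm_le_enum Vs kd f : (forall w, 0 <= f w) -> exists sel, norm Vs kd f <= ls f (enum Vs kd sel).
Proof.
  revert kd f; induction Vs as [|V Vs IH]; intros kd f Hf.
  - exists (fun _ => 0%Z). simpl. lra.
  - simpl. destruct (kd 0%nat).
    + assert (H : forall t, {sel | norm Vs (fun c => kd (S c)) (fun w => f (t::w))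
                 <= ls (fun w => f (t::w)) (enum Vs (fun c => kd (S c)) sel)}).
      { intros t. apply constructive_indefinite_description. apply IH. auto. }
      exists (fun p => match p with [] => 0%Z | t :: p' => proj1_sig (H t) p' end).
      rewrite ls_flat_map. apply ls_le. intros t Ht. rewrite ls_map.
      exact (proj2_sig (H t)).
    + destruct (lmax_attain (fun t => norm Vs (fun c => kd (S c)) (fun w => f (t :: w))) V) as [H0|[t [Ht H]]].
      * exists (fun _ => 0%Z). eapply Rle_trans; [apply H0|]. apply ls_nonneg; auto.
      * destruct (IH (fun c => kd (S c)) (fun w => f (t::w))) as [sel Hs]; auto.
        exists (fun p => match p with [] => t | _ :: p' => sel p' end). simpl.
        rewrite ls_map. eapply Rle_trans; [apply H|]. apply Hs.
Qed.

Lemma in_enum_cons Vs V kd sel u : In u (enum (V::Vs) kd sel) ->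
  exists t w, u = t :: w /\ In w (enum Vs (fun c => kd (S c)) (fun p => sel (t :: p))) /\
     (kd 0%nat = false -> t = sel []).
Proof. simpl. destruct (kd 0%nat).
 - intros H. apply in_flat_map in H. destruct H as [t [Ht H]]. apply in_map_iff in H.
   destruct H as [w [<- Hw]]. exists t, w. split; auto. split; auto. discriminate.
 - intros H. apply in_map_iff in H. destruct H as [w [<- Hw]]. exists (sel []), w. auto. Qed.

Lemma enum_len Vs kd sel u : In u (enum Vs kd sel) -> length u = length Vs.
Proof. revert kd sel u; induction Vs; intros kd sel u H.
 - simpl in H. destruct H as [<-|[]]; auto.
 - apply in_enum_cons in H. destruct H as [t [w [-> [Hw _]]]]. simpl. f_equal. eauto. Qed.

Lemma nodup_fm (V : list Z) (B : Z -> list (list Z)) : NoDup V -> (forall t, NoDup (B t)) ->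
  NoDup (flat_map (fun t => map (cons t) (B t)) V).
Proof. intros HV HB. induction V as [|a V IHV]; simpl; [constructor|].
     inversion HV; subst. apply NoDup_app.
     * apply NoDup_map_NoDup_ForallPairs; [|apply HB]. intros x y _ _ H; injection H; auto.
     * apply IHV; auto.
     * intros x Hx Hx'. apply in_map_iff in Hx. destruct Hx as [w [<- _]].
       apply in_flat_map in Hx'. destruct Hx' as [t [Ht Hx']]. apply in_map_iff in Hx'.
       destruct Hx' as [w' [Heq _]]. injection Heq; intros; subst. contradiction.
Qed.

Lemma enum_nodup Vs kd sel : Forall (@NoDup Z) Vs -> NoDup (enum Vs kd sel).
Proof. revert kd sel; induction Vs as [|V Vs IH]; intros kd sel HV.
 - simpl. constructor; [auto|constructor].
 - inversion HV as [|? ? HV1 HV2]; subst. simpl. destruct (kd 0%nat).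
   + apply nodup_fm; auto.
   + apply NoDup_map_NoDup_ForallPairs; [|apply IH; auto]. intros x y _ _ H; injection H; auto.
Qed.

Lemma enum_prefix Vs kd sel q u u' : In u (enum Vs kd sel) -> In u' (enum Vs kd sel) ->
  firstn q u = firstn q u' -> kd q = false -> nth q u 0%Z = nth q u' 0%Z.
Proof. revert kd sel q u u'; induction Vs as [|V Vs IH]; intros kd sel q u u' Hu Hu' Hf Hk.
 - simpl in Hu, Hu'. destruct Hu as [<-|[]]; destruct Hu' as [<-|[]]; auto.
 - apply in_enum_cons in Hu; apply in_enum_cons in Hu'.
   destruct Hu as [t [w [-> [Hw Ht]]]]; destruct Hu' as [t' [w' [-> [Hw' Ht']]]].
   destruct q as [|q].
   + simpl. rewrite Ht, Ht'; auto.
   + simpl in Hf. injection Hf; intros Hf' <-. simpl. eapply IH; eauto.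
Qed.

Lemma enum_supprefix Vs kd sel q u u' : (forall c, (c < q)%nat -> kd c = false) ->
  In u (enum Vs kd sel) -> In u' (enum Vs kd sel) -> firstn q u = firstn q u'.
Proof. revert kd sel q u u'; induction Vs as [|V Vs IH]; intros kd sel q u u' Hk Hu Hu'.
 - simpl in Hu, Hu'. destruct Hu as [<-|[]]; destruct Hu' as [<-|[]]; auto.
 - apply in_enum_cons in Hu; apply in_enum_cons in Hu'.
   destruct Hu as [t [w [-> [Hw Ht]]]]; destruct Hu' as [t' [w' [-> [Hw' Ht']]]].
   destruct q as [|q]; auto.
   assert (t = t') by (rewrite Ht, Ht'; auto; apply Hk; lia). subst t'.
   simpl. f_equal. apply (IH (fun c => kd (S c)) (fun p => sel (t :: p))); auto.
   intros c Hc; apply Hk; lia.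
Qed.

Definition rot (p : nat) (u : list Z) : list Z :=
  match u with [] => [] | a :: u' => a :: skipn p u' ++ firstn p u' end.

Lemma firstn_app_len {A} (l1 l2 : list A) q : length l1 = q -> firstn q (l1 ++ l2) = l1.
Proof. intros <-. induction l1; simpl; auto. f_equal; auto. Qed.
Lemma skipn_app_len {A} (l1 l2 : list A) q s : length l1 = q -> skipn (q + s) (l1 ++ l2) = skipn s l2.
Proof. intros <-. induction l1; simpl; auto. Qed.
Lemma skipn_app_len0 {A} (l1 l2 : list A) q : length l1 = q -> skipn q (l1 ++ l2) = l2.
Proof. intros H. rewrite <- (Nat.add_0_r q). rewrite skipn_app_len; auto. Qed.
Lemma nth_app_len {A} (l1 l2 : list A) x q d : length l1 = q -> nth q (l1 ++ x :: l2) d = x.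
Proof. intros <-. induction l1; simpl; auto. Qed.
Lemma app_len_inj {A} (l1 l2 l1' l2' : list A) : l1 ++ l2 = l1' ++ l2' -> length l1 = length l1' ->
  l1 = l1' /\ l2 = l2'.
Proof. revert l1'; induction l1; intros [|b l1'] H Hl; simpl in *; try lia; auto.
 injection H; intros H' ->. destruct (IHl1 l1' H') as [-> ->]; auto. Qed.

Lemma rot_len p u : length (rot p u) = length u.
Proof. destruct u; simpl; auto. rewrite length_app, length_skipn, length_firstn. lia. Qed.

Lemma rot_split p a b w : length b = p -> rot p (a :: b ++ w) = a :: w ++ b.
Proof. intros H. simpl. rewrite skipn_app_len0, firstn_app_len; auto. Qed.

Lemma rot_rot p q u : length u = S (p + q) -> rot q (rot p u) = u.
Proof. destruct u as [|a u]; simpl; auto. intros H.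
 rewrite skipn_app_len0, firstn_app_len by (rewrite length_skipn; lia).
 rewrite firstn_skipn; auto. Qed.

Lemma hat_len i z : (1 <= i <= length z)%nat -> length (hat i z) = pred (length z).
Proof. intros H. unfold hat. rewrite length_app, length_firstn, length_skipn. lia. Qed.

Lemma hat_split q a w1 x w2 b : length w1 = q ->
  hat (S (S q)) (a :: (w1 ++ x :: w2) ++ b) = a :: w1 ++ w2 ++ b.
Proof. intros H. unfold hat. rewrite <- app_assoc. change (Init.Nat.pred (S (S q))) with (S q).
 change (firstn (S q) (a :: w1 ++ (x :: w2) ++ b)) with (a :: firstn q (w1 ++ (x :: w2) ++ b)).
 change (skipn (S (S q)) (a :: w1 ++ (x :: w2) ++ b)) with (skipn (S q) (w1 ++ (x :: w2) ++ b)).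
 rewrite firstn_app_len by auto.
 replace (S q) with (q + 1)%nat by lia. rewrite skipn_app_len; auto. Qed.

Lemma decomp r m q (u : list Z) : length u = S (r + m) -> (q < m)%nat ->
  exists a b w1 x w2, u = a :: b ++ (w1 ++ x :: w2) /\ length b = r /\ length w1 = q.
Proof. intros Hu Hq. destruct u as [|a u]; [simpl in Hu; lia|]. simpl in Hu.
 set (w := skipn r u). assert (Hw : length w = m) by (unfold w; rewrite length_skipn; lia).
 destruct (skipn q w) as [|x w2] eqn:E.
 - assert (length (skipn q w) = 0)%nat by (rewrite E; auto). rewrite length_skipn in H. lia.
 - exists a, (firstn r u), (firstn q w), x, w2. split; [|split].
   + rewrite <- E, firstn_skipn. unfold w. rewrite firstn_skipn. auto.
   + rewrite length_firstn; lia.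
   + rewrite length_firstn; lia. Qed.

Lemma filter_except (l : list nat) (P : nat -> bool) e : NoDup l ->
  (forall x, In x l -> x <> e -> P x = true) -> (length l - 1 <= length (filter P l))%nat.
Proof. induction l as [|a l IH]; simpl; intros Hn H; [lia|]. inversion Hn; subst.
 destruct (Nat.eq_dec a e).
 - subst. assert (filter P l = l).
   { apply forallb_filter_id. apply forallb_forall. intros x Hx. apply H; auto. intro; subst; auto. }
   destruct (P e); simpl; rewrite H0; lia.
 - rewrite H by auto. simpl. specialize (IH H3 (fun x Hx => H x (or_intror Hx))). lia. Qed.

Lemma boundG n k g1 M Vs kd f : (2 <= k <= n)%nat -> mixed_bound n k g1 M -> length Vs = S n ->
  Forall (@NoDup Z) Vs -> (forall c, kd c = Nat.ltb (S n - k) c) ->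
  (forall u, f u = g1 (rot (S n - k) u) ^ 2) -> norm Vs kd f <= M ^ 2.
Proof.
  intros Hk HM HV HN Hkd Hf. set (r := (S n - k)%nat) in *.
  destruct (norm_le_enum Vs kd f) as [sel Hs]. { intros; rewrite Hf; apply pow2_ge_0. }
  eapply Rle_trans; [apply Hs|]. set (E := enum Vs kd sel) in *.
  assert (HE : E = [] \/ exists u0, In u0 E) by (destruct E; [left|right; exists l; left]; auto).
  destruct HE as [HE|[u0 Hu0]]. { rewrite HE. simpl. apply pow2_ge_0. }
  assert (Hpre : forall u, In u E -> firstn (S r) u = firstn (S r) u0).
  { intros u Hu. apply (enum_supprefix Vs kd sel); auto. intros c Hc. rewrite Hkd. apply Nat.ltb_ge. lia. }
  assert (Hl0 : length u0 = S n) by (rewrite <- HV; eapply enum_len; eauto).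
  assert (Hlp : length (firstn (S r) u0) = S r) by (rewrite length_firstn; lia).
  destruct (firstn (S r) u0) as [|a b] eqn:Hp; [simpl in Hlp; lia|]. simpl in Hlp. injection Hlp; intros Hlb.
  assert (Hu : forall u, In u E -> u = a :: b ++ skipn (S r) u).
  { intros u Hu. rewrite <- (firstn_skipn (S r) u) at 1. rewrite Hpre by auto. auto. }
  replace (ls f E) with (ls (fun w => Rabs (g1 (a :: w ++ b)) ^ 2) (map (skipn (S r)) E)).
  - apply HM.
    + lia.
    + apply NoDup_map_NoDup_ForallPairs. intros u u' H1 H2 Heq.
      rewrite (Hu u H1), (Hu u' H2), Heq; auto.
      apply enum_nodup; auto.
    + apply Forall_forall. intros w Hw. apply in_map_iff in Hw. destruct Hw as [u [<- Hu']].
      rewrite length_skipn. rewrite (enum_len Vs kd sel u Hu'). lia.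
  - rewrite ls_map. apply ls_ext_in. intros u Hu'. rewrite Hf, pow2_abs.
    rewrite (Hu u Hu') at 2. rewrite rot_split; auto.
Qed.

Lemma boundH n k g i Ai Vs kd f : (2 <= k <= n)%nat -> (2 <= i <= k)%nat -> l2_bound n g Ai ->
  length Vs = S n -> Forall (@NoDup Z) Vs ->
  (forall c, kd c = negb (Nat.eqb c (S n - k + i - 1))) ->
  (forall u, f u = g (hat i (rot (S n - k) u)) ^ 2) -> norm Vs kd f <= Ai ^ 2.
Proof.
  intros Hk Hi HA HV HN Hkd Hf. set (r := (S n - k)%nat) in *.
  destruct (norm_le_enum Vs kd f) as [sel Hs]. { intros; rewrite Hf; apply pow2_ge_0. }
  eapply Rle_trans; [apply Hs|]. set (E := enum Vs kd sel) in *.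
  assert (HlE : forall u, In u E -> length u = S (r + (k - 1))).
  { intros u Hu. rewrite (enum_len Vs kd sel u Hu). lia. }
  replace (ls f E) with (ls (fun w => g w ^ 2) (map (fun u => hat i (rot r u)) E)).
  - apply HA.
    + apply NoDup_map_NoDup_ForallPairs; [|apply enum_nodup; auto]. intros u u' H1 H2 Heq.
      destruct (decomp r (k - 1) (i - 2) u) as [a [b [w1 [x [w2 [Eu [Hb Hw1]]]]]]]; auto; try lia.
      destruct (decomp r (k - 1) (i - 2) u') as [a' [b' [w1' [x' [w2' [Eu' [Hb' Hw1']]]]]]]; auto; try lia.
      pose proof (HlE u H1) as L1. pose proof (HlE u' H2) as L2.
      subst u u'. rewrite !rot_split in Heq by auto.
      replace i with (S (S (i - 2))) in Heq by lia.
      rewrite !hat_split in Heq by auto. injection Heq; intros Heq' <-.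
      destruct (app_len_inj _ _ _ _ Heq') as [<- Heq2]; [lia|].
      simpl in L1, L2. rewrite !length_app in L1, L2. simpl in L1, L2.
      destruct (app_len_inj _ _ _ _ Heq2) as [<- <-]; [lia|].
      assert (Hre : forall a b w1 (x : Z) w2, a :: b ++ (w1 ++ x :: w2) = (a :: b ++ w1) ++ x :: w2)
        by (intros; simpl; rewrite app_assoc; auto).
      rewrite Hre in H1, H2 |- *.
      assert (Hlen : length (a :: b ++ w1) = S (r + (i - 2))) by (simpl; rewrite length_app; lia).
      pose proof (enum_prefix Vs kd sel (S (r + (i - 2))) _ _ H1 H2) as Hx.
      rewrite !firstn_app_len, !nth_app_len in Hx by auto.
      rewrite Hx; auto. rewrite Hkd. replace (r + i - 1)%nat with (S (r + (i - 2))) by lia.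
      rewrite Nat.eqb_refl; auto.
    + apply Forall_forall. intros w Hw. apply in_map_iff in Hw. destruct Hw as [u [<- Hu']].
      rewrite hat_len; rewrite rot_len, (HlE u Hu'); lia.
  - rewrite ls_map. apply ls_ext_in. intros u Hu'. rewrite Hf; auto.
Qed.

Section Sub.
Context {A : Type} (dec : forall x y : A, {x = y} + {x <> y}).
Lemma ls_remove_le (f : A -> R) x L : (forall y, In y L -> 0 <= f y) -> ls f (remove dec x L) <= ls f L.
Proof. induction L as [|y L IH]; simpl; intros H; [lra|]. destruct (dec x y).
 - specialize (IH (fun z h => H z (or_intror h))). specialize (H y (or_introl eq_refl)). lra.
 - simpl. specialize (IH (fun z h => H z (or_intror h))). lra. Qed.
Lemma ls_remove (f : A -> R) x L : (forall y, In y L -> 0 <= f y) -> In x L -> f x + ls f (remove dec x L) <= ls f L.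
Proof. induction L as [|y L IH]; simpl; intros H Hx; [contradiction|]. destruct (dec x y).
 - subst. pose proof (ls_remove_le f y L (fun z h => H z (or_intror h))). lra.
 - destruct Hx as [->|Hx]; [congruence|]. simpl. specialize (IH (fun z h => H z (or_intror h)) Hx). lra. Qed.
Lemma ls_subset (f : A -> R) (S L : list A) : NoDup S -> incl S L -> (forall y, In y L -> 0 <= f y) -> ls f S <= ls f L.
Proof. revert L; induction S as [|x S IH]; simpl; intros L HN Hi H. apply ls_nonneg; auto.
 inversion HN; subst. eapply Rle_trans; [|apply (ls_remove f x L); auto; apply Hi; left; auto].
 apply Rplus_le_compat_l. apply IH; auto.
 - intros y Hy. apply in_in_remove. intro; subst; contradiction. apply Hi; right; auto.
 - intros y Hy. apply H. eapply in_remove; eauto. Qed.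
End Sub.

Lemma box_len Vs u : In u (boxlist Vs) -> length u = length Vs.
Proof. revert u; induction Vs; simpl; intros u H. destruct H as [<-|[]]; auto.
 apply in_flat_map in H. destruct H as [t [_ H]]. apply in_map_iff in H. destruct H as [w [<- H]].
 simpl; f_equal; auto. Qed.

Lemma in_boxlist Vs u : length u = length Vs ->
  (forall c, (c < length u)%nat -> In (nth c u 0%Z) (nth c Vs [])) -> In u (boxlist Vs).
Proof. revert u; induction Vs as [|V Vs IH]; intros [|t w] Hl H; simpl in *; try lia; auto.
 apply in_flat_map. exists t. split. apply (H 0%nat); lia.
 apply in_map. apply IH. lia. intros c Hc. apply (H (S c)). lia. Qed.

Lemma prodR_lp k f : prodR 2 k f = lp f (seq 2 (k - 1)).
Proof. unfold prodR. replace (S k - 2)%nat with (k - 1)%nat by lia. reflexivity. Qed.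
Lemma nth_map_seq {B} (f : nat -> B) N c d : (c < N)%nat -> nth c (map f (seq 0 N)) d = f c.
Proof. intros H. rewrite nth_indep with (d' := f 0%nat) by (rewrite length_map, length_seq; auto).
 rewrite map_nth, seq_nth; auto. Qed.
Lemma seq1_split k : (1 <= k)%nat -> seq 1 k = 1%nat :: seq 2 (k - 1).
Proof. destruct k; [lia|]. intros _. simpl. rewrite Nat.sub_0_r; auto. Qed.
Lemma lp_sq {B} (f : B -> R) l : lp (fun j => f j ^ 2) l = (lp f l) ^ 2.
Proof. induction l as [|a l IH]; [unfold lp; simpl; ring|].
 change (lp (fun j => f j ^ 2) (a :: l)) with (f a ^ 2 * lp (fun j => f j ^ 2) l).
 change (lp f (a::l)) with (f a * lp f l). rewrite IH; ring. Qed.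

Theorem lemma6p3 (n k : nat) (g1 : list Z -> R) (g : nat -> list Z -> R)
  (M : R) (A : nat -> R) :
  (2 <= k)%nat -> (k <= n)%nat ->
  (forall z, length z = S n -> 0 <= g1 z) ->
  (forall i z, (2 <= i <= k)%nat -> length z = n -> 0 <= g i z) ->
  0 <= M -> mixed_bound n k g1 M ->
  (forall i, (2 <= i <= k)%nat -> 0 <= A i /\ l2_bound n (g i) (A i)) ->
  forall Sz : list (list Z), NoDup Sz -> Forall (fun z => length z = S n) Sz ->
    rpow (sumR (fun z => rpow (g1 z * prodR 2 k (fun i => g i (hat i z)))
                              (2 / INR (k - 1)))
               Sz)
         (INR (k - 1) / 2)
    <= M * prodR 2 k A.
Proof.
  intros Hk Hkn Hg1 Hg HM HMb HA Sz HSz HSl.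
  set (r := (S n - k)%nat). set (m := (k - 1)%nat).
  set (th := / INR m).
  assert (HINR : 0 < INR m) by (apply lt_0_INR; unfold m; lia).
  assert (Hth : 0 < th) by (apply Rinv_0_lt_compat; auto).
  set (Y := M * prodR 2 k A).
  assert (HY : 0 <= Y).
  { unfold Y. apply Rmult_le_pos; auto. rewrite prodR_lp. apply lp_nonneg.
    intros j Hj. apply in_seq in Hj. apply HA. lia. }
  set (Phi := fun z => rpow (g1 z * prodR 2 k (fun i => g i (hat i z))) (2 * th)).
  change (sumR (fun z => rpow (g1 z * prodR 2 k (fun i => g i (hat i z))) (2 / INR (k - 1))) Sz)
    with (ls Phi Sz).
  assert (HL : ls Phi Sz <= rpow Y (2 * th)).
  { set (U := map (rot m) Sz).
    assert (Ha : ls Phi Sz = ls (fun u => Phi (rot r u)) U).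
    { unfold U. rewrite ls_map. apply ls_ext_in. intros z Hz.
      rewrite rot_rot; auto. rewrite Forall_forall in HSl. rewrite (HSl z Hz). unfold m, r; lia. }
    rewrite Ha.
    set (Vs := map (fun c => nodup Z.eq_dec (map (fun u => nth c u 0%Z) U)) (seq 0 (S n))).
    assert (HVl : length Vs = S n) by (unfold Vs; rewrite length_map, length_seq; auto).
    assert (HVn : Forall (@NoDup Z) Vs).
    { apply Forall_forall. intros V HV. unfold Vs in HV. apply in_map_iff in HV.
      destruct HV as [c [<- _]]. apply NoDup_nodup. }
    assert (HUl : forall u, In u U -> length u = S n).
    { intros u Hu. unfold U in Hu. apply in_map_iff in Hu. destruct Hu as [z [<- Hz]].
      rewrite rot_len. rewrite Forall_forall in HSl; auto. }
    set (kind := fun j c => if Nat.eqb j 1 then Nat.ltb r c else negb (Nat.eqb c (r + j - 1))).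
    set (F := fun j u => if Nat.eqb j 1 then g1 (rot r u) ^ 2 else g j (hat j (rot r u)) ^ 2).
    apply Rle_trans with (boxsum Vs (fun u => Phi (rot r u))).
    { apply (ls_subset (list_eq_dec Z.eq_dec)).
      - apply NoDup_map_NoDup_ForallPairs; auto. intros z z' H1 H2 Heq.
        rewrite Forall_forall in HSl.
        rewrite <- (rot_rot m r z), <- (rot_rot m r z'), Heq; auto.
        rewrite HSl; auto; unfold m, r; lia. rewrite HSl; auto; unfold m, r; lia.
      - intros u Hu. apply in_boxlist. rewrite HVl; auto.
        intros c Hc. rewrite (HUl u Hu) in Hc.
        unfold Vs. rewrite nth_map_seq by auto. apply nodup_In. apply in_map_iff; exists u; auto.
      - intros; apply rpow_nonneg. }
    replace (boxsum Vs (fun u => Phi (rot r u)))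
      with (boxsum Vs (fun u => lp (fun j => rpow (F j u) th) (seq 1 k))).
    2:{ unfold boxsum. apply ls_ext_in. intros u Hu. apply box_len in Hu. rewrite HVl in Hu.
        assert (Hz : length (rot r u) = S n) by (rewrite rot_len; auto).
        rewrite (seq1_split k) by lia.
        simpl lp. unfold Phi. rewrite prodR_lp.
        unfold F at 1. simpl Nat.eqb. cbv iota.
        rewrite rpow_mult, rpow_sq; auto.
        2:{ apply lp_nonneg. intros j Hj. apply in_seq in Hj. apply Hg. lia. rewrite hat_len; lia. }
        f_equal. rewrite <- rpow_lp.
        2:{ intros j Hj. apply in_seq in Hj. apply Hg. lia. rewrite hat_len; lia. }
        apply lp_ext_in. intros j Hj. apply in_seq in Hj. unfold F.
        rewrite (proj2 (Nat.eqb_neq j 1)) by lia. rewrite rpow_sq; auto.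
        apply Hg. lia. rewrite hat_len; lia. }
    eapply Rle_trans.
    { apply (finner Vs (seq 1 k) F kind (fun _ => th)).
      - intros j w. unfold F. destruct (Nat.eqb j 1); apply pow2_ge_0.
      - intros; auto.
      - intros c Hc. rewrite HVl in Hc. rewrite ls_const.
        assert (Hlen : (k - 1 <= length (filter (fun j => kind j c) (seq 1 k)))%nat).
        { replace k with (length (seq 1 k)) at 1 by apply length_seq.
          apply (filter_except _ _ (if Nat.leb c r then 1%nat else (c - r + 1)%nat)).
          apply seq_NoDup. intros x Hx Hxe. apply in_seq in Hx. unfold kind.
          destruct (Nat.leb_spec c r); destruct (Nat.eqb_spec x 1); try lia.
          - apply Bool.negb_true_iff. apply Nat.eqb_neq. lia.
          - apply Nat.ltb_lt. lia.
          - apply Bool.negb_true_iff. apply Nat.eqb_neq. lia. }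
        apply le_INR in Hlen. fold m in Hlen. unfold th.
        apply Rle_trans with (INR m * / INR m). right; field; lra.
        apply Rmult_le_compat_r. left; apply Rinv_0_lt_compat; lra. auto. }
    set (B := fun j => if Nat.eqb j 1 then M ^ 2 else A j ^ 2).
    apply Rle_trans with (lp (fun j => rpow (B j) th) (seq 1 k)).
    { apply lp_le. intros j Hj. apply in_seq in Hj. split; [apply rpow_nonneg|].
      apply rpow_le; auto. split. apply norm_nonneg. intros w; unfold F; destruct (Nat.eqb j 1); apply pow2_ge_0.
      unfold B. destruct (Nat.eqb_spec j 1).
      - subst j. apply (boundG n k g1 M Vs); auto; try lia.
      - destruct (HA j) as [HAj HAl]; [lia|].
        apply (boundH n k (g j) j (A j) Vs); auto; try lia.
        + intros c. unfold kind. rewrite (proj2 (Nat.eqb_neq j 1)) by auto. auto.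
        + intros u. unfold F. rewrite (proj2 (Nat.eqb_neq j 1)) by auto. auto. }
    rewrite rpow_lp.
    2:{ intros j _. unfold B. destruct (Nat.eqb j 1); apply pow2_ge_0. }
    replace (lp B (seq 1 k)) with (Y ^ 2). rewrite rpow_sq; auto. right; auto.
    rewrite (seq1_split k) by lia.
    simpl lp. unfold B at 1. simpl Nat.eqb. cbv iota.
    unfold Y. rewrite prodR_lp. rewrite (lp_ext_in B (fun j => A j ^ 2)).
    rewrite lp_sq. ring.
    intros j Hj. apply in_seq in Hj. unfold B. rewrite (proj2 (Nat.eqb_neq j 1)) by lia. auto. }
  assert (Hs0 : 0 <= ls Phi Sz) by (apply ls_nonneg; intros; apply rpow_nonneg).
  apply Rle_trans with (rpow (rpow Y (2 * th)) (INR (k - 1) / 2)).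
  - apply rpow_le. fold m. lra. split; auto.
  - rewrite rpow_rpow by auto. fold m. unfold th. replace (2 * / INR m * (INR m / 2)) with 1 by (field; lra).
    rewrite rpow_1; auto. right; auto.
Qed.
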